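(* For $n\ge 6$ let $e(n)$ (resp. $o(n)$) be the number of partitions of $n$ with parts $p_1\ge p_2\ge\dots\ge p_k$ such that (a) $k\ge 3$; (b) the three largest parts are equal, $p_1=p_2=p_3$, this common value is at least $3$, and it is even (resp. odd); (c) the remaining parts $p_4,\dots,p_k$, if present, are distinct; (d) the fourth largest part, if present, satisfies $p_4\le p_3-2$; (e) the smallest part is not $1$. For an integer $t$ put $P_1(t)=\tfrac12(3t^2+t+4)$, $P_2(t)=\tfrac12(3(t+1)^2-t-1)$, $P_3(t)=\tfrac12(3(t+1)^2-t+3)$, $P_4(t)=\tfrac12(3(t+1)^2+t+1)$. Then for every integer $n\ge 6$: (a) $e(n)=o(n)$ if $n\notin\{P_1(t),P_2(t),P_3(t),P_4(t)\}$ for every integer $t\ge 2$; (b) $e(n)=o(n)-1$ if $n=P_1(t)$ or $n=P_4(t)$ for some integer $t\ge 2$; (c) $e(n)=o(n)+1$ if $n=P_2(t)$ or $n=P_3(t)$ for some integer $t\ge 2$. *)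

(* Defs.v *)
From mathcomp Require Import all_boot.
Set Implicit Arguments. Unset Strict Implicit. Unset Printing Implicit Defensive.

Definition is_partition (n : nat) (s : seq nat) : bool :=
  [&& sorted geq s, all (fun x => 0 < x) s & sumn s == n].

Definition good_part (b : bool) (s : seq nat) : bool :=
  [&& 3 <= size s,
      nth 0 s 0 == nth 0 s 1, nth 0 s 1 == nth 0 s 2,
      3 <= nth 0 s 0, odd (nth 0 s 0) == b,
      uniq (drop 3 s),
      (4 <= size s) ==> (nth 0 s 3 + 2 <= nth 0 s 2)
    & last 0 s != 1].

(* Every partition of n has at most n parts, each at most n; we encode a
   partition as its nonincreasing list of parts padded with zeros to length n.
   This is a bijection between nonincreasing n-tuples over 'I_(n+1) and
   partitions of n (after dropping the zeros). *)
Definition parts_of (n : nat) (t : n.-tuple 'I_n.+1) : seq nat :=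
  [seq x <- map val t | 0 < x].

Definition count_parts (b : bool) (n : nat) : nat :=
  #|[set t : n.-tuple 'I_n.+1 |
      sorted geq (map val t) && is_partition n (parts_of t)
      && good_part b (parts_of t)]|.

Definition e_count (n : nat) : nat := count_parts false n.
Definition o_count (n : nat) : nat := count_parts true n.

(* The four quadratic polynomials (all numerators are even, so %/ 2 is exact). *)
Definition P1 (t : nat) : nat := (3 * t ^ 2 + t + 4) %/ 2.
Definition P2 (t : nat) : nat := (3 * (t + 1) ^ 2 - t - 1) %/ 2.
Definition P3 (t : nat) : nat := (3 * (t + 1) ^ 2 - t + 3) %/ 2.
Definition P4 (t : nat) : nat := (3 * (t + 1) ^ 2 + t + 1) %/ 2.

(* Main.v *)
Require Import Defs.
From mathcomp Require Import all_boot.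
From mathcomp Require Import zify.
Set Implicit Arguments. Unset Strict Implicit. Unset Printing Implicit Defensive.

Fixpoint run (l : seq nat) : nat :=
  match l with
  | [::] => 0
  | x :: l' => match l' with
               | [::] => 1
               | y :: _ => if x == y.+1 then (run l').+1 else 1
               end
  end.

Lemma run_geP l i : i <= run l <->
  (i <= size l /\ forall j, j.+1 < i -> nth 0 l j = (nth 0 l j.+1).+1).
Proof.
elim: l i => [|x l IH] i /=.
  split; [move=> h; split=> // j hj; lia | by case].
case: l IH => [|y l] IH.
  split; [move=> h; split=> // j hj; lia | by case].
case: eqP => [exy|nxy].
  case: i => [|i]; first by split=> // _; split=> // j; lia.
  rewrite ltnS (IH i) /=; split.
    case=> h1 h2; split=> // -[|j] hj //=; exact: h2.
  case=> h1 h2; split=> // j hj; exact: (h2 j.+1).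
split.
  move=> hi; split; [lia|] => j hj; lia.
case=> h1 h2; case: i h1 h2 => [|[|i]] // h1 h2.
by have := h2 0 isT => /= /nxy.
Qed.

Lemma run_le l : run l <= size l.
Proof. by have [] := (run_geP l (run l)).1 (leqnn _). Qed.

Lemma run_cons l j : j.+1 < run l -> nth 0 l j = (nth 0 l j.+1).+1.
Proof. by move=> h; have [_ ] := (run_geP l (run l)).1 (leqnn _); apply. Qed.

Lemma run_exact l : run l < size l -> 0 < run l ->
  nth 0 l (run l).-1 != (nth 0 l (run l)).+1.
Proof.
move=> h1 h2; apply/eqP=> e.
have : (run l).+1 <= run l; last by rewrite ltnn.
apply/run_geP; split=> // j hj.
case: (ltngtP j.+1 (run l)) => hj'; first exact: run_cons.
  lia.
have -> : j = (run l).-1 by lia.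
by rewrite prednK.
Qed.

Definition decr (l : seq nat) := forall i, i.+1 < size l -> nth 0 l i.+1 < nth 0 l i.

Lemma decr_le l i j : decr l -> i <= j -> j < size l -> nth 0 l j + (j - i) <= nth 0 l i.
Proof.
move=> hd hij; elim: j hij => [|j IH] hij hj.
  by rewrite (_ : i = 0) ?addn0 //; lia.
case: (ltngtP i j.+1) => h; last by rewrite h subnn addn0.
  have := hd j hj; have := IH (ltnSE h) (ltnW hj). lia.
lia.
Qed.

Definition Dom l := [/\ decr l, forall i, i < size l -> 3 <= nth 0 l i & 3 <= run l].

Definition move1 (l : seq nat) :=
  let s := last 0 l in map S (take s l) ++ drop s (take (size l).-1 l).
Definition move2 (l : seq nat) :=
  let r := run l in map predn (take r l) ++ drop r l ++ [:: r].

Definition F (l : seq nat) :=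
  let k := size l in let s := last 0 l in let r := run l in
  if (s <= r) && (s < k) then move1 l
  else if (r < s) && ~~ ((r == k) && (s == r.+1)) then move2 l else l.

Lemma size_move1 l : last 0 l < size l -> size (move1 l) = (size l).-1.
Proof.
move=> h; rewrite /move1 size_cat size_map size_drop !size_take h.
case: ifP => h2; lia.
Qed.

Lemma nth_move1 l i : last 0 l < size l -> i < (size l).-1 ->
  nth 0 (move1 l) i = if i < last 0 l then (nth 0 l i).+1 else nth 0 l i.
Proof.
move=> h hi; rewrite /move1 nth_cat size_map size_take h.
case: ifP => hs.
  by rewrite (nth_map 0) ?size_take ?h // nth_take.
rewrite nth_drop nth_take; last lia.
by congr nth; lia.
Qed.

Lemma size_move2 l : size (move2 l) = (size l).+1.
Proof.
rewrite /move2 size_cat size_map size_cat size_drop size_take /=.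
have := run_le l; case: ifP => h1 h2; lia.
Qed.

Lemma nth_move2 l i : i <= size l ->
  nth 0 (move2 l) i = if i < run l then (nth 0 l i).-1
                      else if i < size l then nth 0 l i else run l.
Proof.
move=> hi; have hr := run_le l.
rewrite /move2 nth_cat size_map size_take.
have -> : (if run l < size l then run l else size l) = run l by case: ifP; lia.
case: ifP => h1.
  by rewrite (nth_map 0) ?size_take ?nth_take //; case: ifP; lia.
rewrite nth_cat size_drop.
case: ifP => h2.
  rewrite nth_drop; case: ifP => h3; [congr nth; lia | lia].
case: ifP => h3; first lia.
have -> : i - run l - (size l - run l) = 0 by lia.
by [].
Qed.

Lemma sumn_mapS t : sumn (map S t) = sumn t + size t.
Proof. elim: t => //= x t ->; lia. Qed.

Lemma sumn_mapP t : (forall i, i < size t -> 0 < nth 0 t i) ->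
  sumn (map predn t) + size t = sumn t.
Proof.
elim: t => //= x t IH h.
have h0 := h 0 isT.
have := IH (fun i hi => h i.+1 hi). simpl in h0. lia.
Qed.

Lemma mapPS t : map predn (map S t) = t.
Proof. by elim: t => //= x t ->. Qed.

Lemma mapSP_take l r : (forall i, i < size l -> 0 < nth 0 l i) ->
  map S (map predn (take r l)) = take r l.
Proof.
elim: l r => [|x l IH] [|r] h //=.
have h0 := h 0 isT; simpl in h0.
rewrite IH ?prednK // => i hi; exact: (h i.+1).
Qed.

Lemma take_last l : l != [::] -> take (size l).-1 l ++ [:: last 0 l] = l.
Proof.
case/lastP: l => // b x _.
by rewrite size_rcons /= -cats1 take_size_cat // last_cat.
Qed.

Lemma Dom_facts l : Dom l ->
  [/\ 3 <= size l, 3 <= last 0 l, last 0 l = nth 0 l (size l).-1 &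
      forall i, i < size l -> last 0 l <= nth 0 l i].
Proof.
case=> hd ha hr.
have hs : 3 <= size l by have := run_le l; lia.
have hl : last 0 l = nth 0 l (size l).-1 by rewrite nth_last.
split=> //; first by rewrite hl; apply: ha; lia.
move=> i hi; rewrite hl; have := decr_le (i:=i) (j:=(size l).-1) hd; lia.
Qed.

Section Moves.
Variable l : seq nat.
Hypothesis hD : Dom l.

Lemma move1_props : last 0 l <= run l -> last 0 l < size l ->
  [/\ Dom (move1 l), sumn (move1 l) = sumn l, nth 0 (move1 l) 0 = (nth 0 l 0).+1
    & F (move1 l) = l].
Proof.
move=> hA1 hA2.
have [hd ha hr] := hD.
have [hs hs3 hlast hge] := Dom_facts hD.
set s := last 0 l in hA1 hA2 hs3 hlast hge *.
set k := size l in hA2 hs hlast hge ha hd.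
set l' := move1 l.
have sz' : size l' = k.-1 by rewrite size_move1.
have nth' : forall i, i < k.-1 -> nth 0 l' i = if i < s then (nth 0 l i).+1 else nth 0 l i.
  by move=> i hi; rewrite nth_move1.
have hdecr : decr l'.
  move=> i; rewrite sz' => hi; rewrite !nth' //; try lia.
  have := hd i ltac:(lia).
  case: ifP => h1; case: ifP => h2; lia.
have hall : forall i, i < size l' -> 3 <= nth 0 l' i.
  move=> i; rewrite sz' => hi; rewrite nth' //; have := ha i ltac:(lia).
  case: ifP; lia.
have hrun : run l' = s.
  apply/eqP; rewrite eqn_leq; apply/andP; split.
    rewrite leqNgt; apply/negP => /run_geP [h1 h2].
    have := h2 s.-1 ltac:(lia); rewrite prednK; last lia.
    rewrite !nth'; try lia.
    rewrite prednK; last lia. rewrite ltnn.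
    have := hd s.-1. rewrite prednK; last lia.
    case: ifP => h3 h4; lia.
  apply/run_geP; split; first lia.
  move=> j hj; rewrite !nth'; try lia.
  rewrite hj ltnW //; congr S; apply: run_cons; lia.
have hlast' : s < last 0 l' /\ ~~ ((s == k.-1) && (last 0 l' == s.+1)).
  rewrite -nth_last sz' nth'; last lia.
  have := hd k.-2 ltac:(lia).
  have -> : k.-2.+1 = k.-1 by lia.
  rewrite -hlast.
  case: ifP => h1; lia.
have hsum : sumn l' = sumn l.
  rewrite /l' /move1 sumn_cat sumn_mapS size_takel; last lia.
  rewrite -(take_takel l (_ : s <= k.-1)); last lia.
  rewrite -[X in _ = sumn X](take_last (l:=l)); last by apply/eqP=> e; rewrite /k e in hs.
  rewrite sumn_cat /= -/s -/k.
  have := congr1 sumn (cat_take_drop s (take k.-1 l)); rewrite sumn_cat; lia.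
have hD' : Dom l' by split=> //; rewrite hrun.
split=> //.
  rewrite nth'; last lia. by case: ifP => //; lia.
rewrite {1}/F sz' hrun.
case: hlast' => h1 h2.
rewrite (_ : (last 0 l' <= s) = false); last lia.
rewrite h1 h2 /= /move2 hrun.
have szs : size (map S (take s l)) = s by rewrite size_map size_takel //; lia.
rewrite /l' /move1 -/s take_size_cat // drop_size_cat // mapPS.
rewrite -(take_takel l (_ : s <= k.-1)); last lia.
rewrite catA cat_take_drop take_last //.
by apply/eqP=> e; rewrite /k e in hs.
Qed.

Lemma move2_props : run l < last 0 l -> ~~ ((run l == size l) && (last 0 l == (run l).+1)) ->
  [/\ Dom (move2 l), sumn (move2 l) = sumn l, nth 0 (move2 l) 0 = (nth 0 l 0).-1
    & F (move2 l) = l].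
Proof.
move=> hB1 hB2.
have [hd ha hr] := hD.
have [hs hs3 hlast hge] := Dom_facts hD.
set s := last 0 l in hB1 hB2 hs3 hlast hge *.
set k := size l in hB2 hs hlast hge ha hd.
set r := run l in hB1 hB2 hr.
have hrk : r <= k by apply: run_le.
set l' := move2 l.
have sz' : size l' = k.+1 by rewrite size_move2.
have nth' : forall i, i <= k -> nth 0 l' i =
   if i < r then (nth 0 l i).-1 else if i < k then nth 0 l i else r.
  by move=> i hi; rewrite nth_move2.
have H1 : forall i, i.+1 < r -> nth 0 l i = (nth 0 l i.+1).+1 by move=> i hi; apply: run_cons.
have H3 : r < k -> nth 0 l r.-1 != (nth 0 l r).+1 by move=> h; apply: run_exact; lia.
have hdecr : decr l'.
  move=> i; rewrite sz' => hi; rewrite !nth' //; try lia.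
  case: (ltngtP i.+1 r) => h1.
  - have := H1 i h1; have := ha i.+1 ltac:(lia); lia.
  - case: ifP => h2.
      rewrite ifT; last lia. by have := hd i h2; lia.
    rewrite ifT; last lia.
    have -> : i = k.-1 by lia.
    rewrite -hlast; lia.
  - case: ifP => h2.
      have := H3 ltac:(lia); rewrite -h1 /=; have := hd i ltac:(lia); lia.
    have ei : i = k.-1 by lia.
    move: hB2; rewrite -h1 (_ : i.+1 == k); last lia.
    rewrite ei -hlast /=. lia.
have hall : forall i, i < size l' -> 3 <= nth 0 l' i.
  move=> i; rewrite sz' => hi; rewrite nth' //; try lia.
  case: ifP => h1; first by have := hge i ltac:(lia); lia.
  case: ifP => h2; [exact: ha | lia].
have hrun : r <= run l'.
  apply/run_geP; split; first lia.
  move=> j hj; rewrite !nth' //; try lia.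
  rewrite hj ltnW //; have := H1 j hj; have := ha j.+1 ltac:(lia); lia.
have hlast' : last 0 l' = r by rewrite /l' /move2 catA cats1 last_rcons.
have hsum : sumn l' = sumn l.
  rewrite /l' /move2 !sumn_cat /= -/r.
  have hp : sumn (map predn (take r l)) + size (take r l) = sumn (take r l).
    apply: sumn_mapP => i; rewrite size_takel // => hi.
    rewrite nth_take //; have := ha i ltac:(lia); lia.
  rewrite size_takel // in hp.
  have := congr1 sumn (cat_take_drop r l); rewrite sumn_cat; lia.
have hD' : Dom l' by split=> //; lia.
split=> //.
  by rewrite nth'; [rewrite ifT //; lia | lia].
rewrite {1}/F sz' hlast'.
have -> : (r <= run l') && (r < k.+1) = true by apply/andP; split; lia.
have szs : size (map predn (take r l)) = r by rewrite size_map size_takel.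
rewrite /move1 hlast' sz' /=.
rewrite /l' /move2 -/r take_size_cat // catA take_size_cat; last first.
  by rewrite size_cat szs size_drop; lia.
rewrite drop_size_cat // mapSP_take ?cat_take_drop // => i hi.
have := ha i hi; lia.
Qed.

End Moves.

Lemma F_props l : Dom l ->
  [/\ Dom (F l), sumn (F l) = sumn l, F (F l) = l &
      F l = l \/ (F l != l /\ (nth 0 (F l) 0 = (nth 0 l 0).+1 \/ nth 0 (F l) 0 = (nth 0 l 0).-1))].
Proof.
move=> hD.
case: (boolP ((last 0 l <= run l) && (last 0 l < size l))) => hA.
  have E : F l = move1 l by rewrite /F hA.
  rewrite E.
  case/andP: hA => hA1 hA2.
  have [h1 h2 h3 h4] := move1_props hD hA1 hA2.
  split=> //; right; split; last by left.
  apply/eqP=> e; have := congr1 (@size nat) e; rewrite size_move1 //; lia.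
case: (boolP ((run l < last 0 l) && ~~ ((run l == size l) && (last 0 l == (run l).+1)))) => hB.
  have E : F l = move2 l by rewrite /F (negbTE hA) hB.
  rewrite E.
  case/andP: hB => hB1 hB2.
  have [h1 h2 h3 h4] := move2_props hD hB1 hB2.
  split=> //; right; split; last by right.
  apply/eqP=> e; have := congr1 (@size nat) e; rewrite size_move2; lia.
have E : F l = l by rewrite /F (negbTE hA) (negbTE hB).
rewrite !E. split=> //; by left.
Qed.

Lemma F_fix l : Dom l -> F l = l ->
  run l = size l /\ (last 0 l = size l \/ last 0 l = (size l).+1).
Proof.
move=> hD; rewrite /F.
have hr := run_le l.
case: ifP => hA.
  move=> e; have := congr1 size e; rewrite size_move1; first (have [hh _ _] := hD; have := run_le l; lia).
  by case/andP: hA.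
case: ifP => hB.
  by move=> e; have := congr1 size e; rewrite size_move2; lia.
move=> _. move/negbT: hA; move/negbT: hB. lia.
Qed.

Fixpoint frun (c k : nat) : seq nat := if k is k'.+1 then (c + k') :: frun c k' else [::].

Lemma size_frun c k : size (frun c k) = k.
Proof. by elim: k => //= k ->. Qed.

Lemma nth_frun c k i : i < k -> nth 0 (frun c k) i = c + k.-1 - i.
Proof.
elim: k i => // k IH [|i] hi /=; first by lia.
rewrite IH //; lia.
Qed.

Lemma sumn_frun c k : sumn (frun c k) * 2 + k = k * (2 * c + k).
Proof. elim: k => //= k IH; nia. Qed.

Lemma last_frun c k : 0 < k -> last 0 (frun c k) = c.
Proof.
move=> hk; rewrite -nth_last size_frun nth_frun; lia.
Qed.

Lemma run_frun c k : run (frun c k) = k.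
Proof.
apply/eqP; rewrite eqn_leq; apply/andP; split.
  by have := run_le (frun c k); rewrite size_frun.
apply/run_geP; rewrite size_frun; split=> // j hj.
rewrite !nth_frun //; lia.
Qed.

Lemma decr_frun c k : decr (frun c k).
Proof. move=> i; rewrite size_frun => hi; rewrite !nth_frun //; lia. Qed.

Lemma full_run l : run l = size l -> l = frun (last 0 l) (size l).
Proof.
move=> hr.
case: (posnP (size l)) => hk.
  by move/size0nil: hk => ->.
apply: (@eq_from_nth _ 0); rewrite ?size_frun // => i hi.
rewrite nth_frun // -nth_last.
have : forall d, d < size l -> nth 0 l ((size l).-1 - d) = nth 0 l (size l).-1 + d.
  elim=> [|d IH] hd; first by rewrite subn0 addn0.
  rewrite run_cons; last by rewrite hr; lia.
  have -> : ((size l).-1 - d.+1).+1 = (size l).-1 - d by lia.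
  rewrite IH; lia.
move=> /(_ ((size l).-1 - i) ltac:(lia)).
have -> : (size l).-1 - ((size l).-1 - i) = i by lia.
lia.
Qed.

Definition Lam n l := [/\ 3 <= size l, decr l, forall i, i < size l -> 2 <= nth 0 l i,
                        3 <= run l & sumn l = n].
Definition belast0 (l : seq nat) := take (size l).-1 l.
Definition G l := if last 0 l == 2 then (if l == [:: 4; 3; 2] then l else rcons (F (belast0 l)) 2)
                  else F l.

Lemma Lam_Dom n l : Lam n l -> last 0 l != 2 -> Dom l.
Proof.
case=> hs hd ha hr _ hl; split=> // i hi.
have hl2 : 2 <= last 0 l by rewrite -nth_last; apply: ha; lia.
case: (ltngtP i (size l).-1) => h.
- have := decr_le (i:=i) (j:=(size l).-1) hd; rewrite nth_last; lia.
- lia.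
- by rewrite h nth_last; lia.
Qed.

Lemma Dom_Lam l : Dom l -> Lam (sumn l) l /\ 3 <= last 0 l.
Proof.
move=> hD; have [hs hl _ _] := Dom_facts hD; case: hD => hd ha hr.
split=> //; split=> // i hi; have := ha i hi; lia.
Qed.

Lemma nth_rcons0 (s : seq nat) x i : i < size s -> nth 0 (rcons s x) i = nth 0 s i.
Proof. by move=> h; rewrite nth_rcons h. Qed.

Lemma Lam_Dom2 n l : Lam n l -> last 0 l = 2 -> l != [:: 4; 3; 2] ->
  Dom (belast0 l) /\ l = rcons (belast0 l) 2.
Proof.
move=> [hs hd ha hr hn] hl hne.
have hl' : l = rcons (belast0 l) 2.
  rewrite -hl -cats1 /belast0 take_last //; apply/eqP=> e; rewrite e in hs; done.
have hs4 : 4 <= size l.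
  case: (ltngtP (size l) 3) => h; [lia | lia |].
  have hf := full_run (l:=l); rewrite h hl in hf.
  have e : l = frun 2 3 by apply: hf; have := run_le l; lia.
  by rewrite e in hne.
have szb : size (belast0 l) = (size l).-1 by rewrite /belast0 size_takel //; lia.
have nb : forall i, i < (size l).-1 -> nth 0 (belast0 l) i = nth 0 l i.
  by move=> i hi; rewrite /belast0 nth_take.
split=> //; split.
- move=> i; rewrite szb => hi; rewrite !nb; try lia; apply: hd; lia.
- move=> i; rewrite szb => hi; rewrite nb //.
  have := decr_le (i:=i) (j:=(size l).-1) hd; rewrite nth_last hl; lia.
- apply/run_geP; rewrite szb; split; first lia.
  move=> j hj; rewrite !nb; try lia; apply: run_cons; lia.
Qed.

Lemma Dom_Lam2 l : Dom l ->
  [/\ Lam (sumn l + 2) (rcons l 2), last 0 (rcons l 2) = 2, rcons l 2 != [:: 4; 3; 2]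
    & belast0 (rcons l 2) = l].
Proof.
move=> hD; have [hs hl3 hl hge] := Dom_facts hD; case: hD => hd ha hr.
have hbel : belast0 (rcons l 2) = l by rewrite /belast0 size_rcons -cats1 take_size_cat.
split; [ | by rewrite last_rcons | | by []].
- split.
  + by rewrite size_rcons; lia.
  + move=> i; rewrite size_rcons => hi; rewrite !nth_rcons.
    case: (ltngtP i.+1 (size l)) => h.
    * exact: hd.
    * lia.
    * have := ha i ltac:(lia). lia.
  + move=> i; rewrite size_rcons => hi; rewrite nth_rcons.
    case: ifP => h; first by have := ha i h; lia.
    by rewrite (_ : i == size l); last lia.
  + apply/run_geP; rewrite size_rcons; split; first lia.
    move=> j hj; rewrite !nth_rcons0; try lia; apply: run_cons; lia.
  + by rewrite sumn_rcons.
- apply/eqP=> e; have := congr1 (@size nat) e; rewrite size_rcons /=; lia.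
Qed.

Lemma G_rcons l : Dom l -> G (rcons l 2) = rcons (F l) 2.
Proof.
move=> hD; have [_ h2 h3 h4] := Dom_Lam2 hD.
by rewrite /G h2 eqxx (negbTE h3) h4.
Qed.

Lemma G_Dom l : Dom l -> G l = F l.
Proof.
move=> hD; have [_ h] := Dom_Lam hD.
by rewrite /G ifN //; apply/eqP=> e; rewrite e in h.
Qed.

Lemma Lam_nth1 n l : Lam n l -> nth 0 l 0 = (nth 0 l 1).+1.
Proof. case=> _ _ _ hr _; apply: run_cons; lia. Qed.

Lemma G_props n l : Lam n l ->
  [/\ Lam n (G l), G (G l) = l &
      G l = l \/ (G l != l /\ odd (nth 0 (G l) 1) = ~~ odd (nth 0 l 1))].
Proof.
move=> hL.
have par : forall l', Lam n l' -> (nth 0 l' 0 = (nth 0 l 0).+1 \/ nth 0 l' 0 = (nth 0 l 0).-1) ->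
   odd (nth 0 l' 1) = ~~ odd (nth 0 l 1).
  move=> l' hL' h.
  have e1 := Lam_nth1 hL; have e2 := Lam_nth1 hL'.
  have h2 : 2 <= nth 0 l 1 by case: hL => hs _ ha _ _; apply: ha; lia.
  case: h => h; rewrite e1 e2 in h.
    by case: h => ->; rewrite oddS.
  have -> : nth 0 l 1 = (nth 0 l' 1).+1 by lia.
  by rewrite oddS negbK.
case: (boolP (last 0 l == 2)) => hl.
  case: (boolP (l == [:: 4; 3; 2])) => he.
    have E : G l = l by rewrite /G hl he.
    by rewrite !E; split=> //; left.
  have [hD hl'] := Lam_Dom2 hL (eqP hl) he.
  set m := belast0 l in hD hl' *.
  have [hD' hs hFF hpar] := F_props hD.
  have E : G l = rcons (F m) 2 by rewrite hl' G_rcons.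
  have [hL' _ _ _] := Dom_Lam2 hD'.
  have nL : n = sumn m + 2 by case: hL => _ _ _ _ <-; rewrite hl' sumn_rcons.
  rewrite hs -nL in hL'.
  have hsz : 0 < size m by case: hD => _ _ hr; have := run_le m; lia.
  have hsz' : 0 < size (F m) by case: hD' => _ _ hr; have := run_le (F m); lia.
  split=> //; first by rewrite E.
    by rewrite E G_rcons // hFF.
  case: hpar => hpar; [left; by rewrite E hpar | right].
  case: hpar => hne hh; split.
    by rewrite E hl'; apply/eqP => /rcons_inj [] /eqP; rewrite (negbTE hne).
  apply: par; first by rewrite E.
  by rewrite E hl' !nth_rcons0.
have hD := Lam_Dom hL hl.
have [hD' hs hFF hpar] := F_props hD.
have [hL' _] := Dom_Lam hD'.
rewrite hs in hL'.
have nL : n = sumn l by case: hL.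
rewrite -nL in hL'.
rewrite !G_Dom //; split=> //.
case: hpar => hpar; [by left | right].
case: hpar => hne hh; split=> //; exact: par.
Qed.
Lemma P1E t : P1 t * 2 = 3 * t ^ 2 + t + 4.
Proof.
rewrite /P1 (_ : 3 * t ^ 2 + t + 4 = t * (3 * t + 1) + 4); last nia.
rewrite divnK // dvdn2 !oddD !oddM !oddD /=; by case: (odd t).
Qed.
Lemma P2E t : P2 t * 2 = (t + 1) * (3 * t + 2).
Proof.
rewrite /P2 (_ : 3 * (t + 1) ^ 2 - t - 1 = (t + 1) * (3 * t + 2)); last nia.
rewrite divnK // dvdn2 !oddM !oddD /=; by case: (odd t).
Qed.
Lemma P3E t : P3 t * 2 = (t + 1) * (3 * t + 2) + 4.
Proof.
rewrite /P3 (_ : 3 * (t + 1) ^ 2 - t + 3 = (t + 1) * (3 * t + 2) + 4); last nia.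
rewrite divnK // dvdn2 !oddD !oddM !oddD /=; by case: (odd t).
Qed.
Lemma P4E t : P4 t * 2 = (t + 1) * (3 * t + 4).
Proof.
rewrite /P4 (_ : 3 * (t + 1) ^ 2 + t + 1 = (t + 1) * (3 * t + 4)); last nia.
rewrite divnK // dvdn2 !oddM !oddD /=; by case: (odd t).
Qed.
Lemma Pdisj n t u : 2 <= t -> 2 <= u -> (n = P1 t \/ n = P4 t) -> (n = P2 u \/ n = P3 u) -> False.
Proof.
move=> ht hu h1 h2.
have e1 : n * 2 = 3 * t ^ 2 + t + 4 \/ n * 2 = (t + 1) * (3 * t + 4).
  by case: h1 => ->; [left; apply: P1E | right; apply: P4E].
have e2 : n * 2 = (u + 1) * (3 * u + 2) \/ n * 2 = (u + 1) * (3 * u + 2) + 4.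
  by case: h2 => ->; [left; apply: P2E | right; apply: P3E].
case: e1 => e1; case: e2 => e2; case: (ltngtP t u) => h; nia.
Qed.

Lemma Dom_frun c k : 3 <= k -> 3 <= c -> Dom (frun c k).
Proof.
move=> hk hc; split; [exact: decr_frun | | by rewrite run_frun].
move=> i; rewrite size_frun => hi; rewrite nth_frun //; lia.
Qed.

Lemma F_frun c k : 0 < k -> (c == k) || (c == k.+1) -> F (frun c k) = frun c k.
Proof.
move=> hk; rewrite /F last_frun // run_frun size_frun.
by case/orP=> /eqP ->; rewrite ?ltnn ?leqnn ?eqxx //= andbF ?ltnSn /= ?ltnn //; case: ifP.
Qed.

Lemma dom_fix m : Dom m -> F m = m -> exists2 k, 3 <= k & (m = frun k k \/ m = frun k.+1 k).
Proof.
move=> hD hF; have [hr hl] := F_fix hD hF.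
have hs : 3 <= size m by case: hD => _ _ h; have := run_le m; lia.
exists (size m) => //.
have e := full_run hr.
by case: hl => h; rewrite h in e; [left | right].
Qed.

Lemma G_fix n l : Lam n l -> G l = l ->
  [\/ exists2 k, 3 <= k & l = frun k k,
      exists2 k, 3 <= k & l = frun k.+1 k,
      exists2 k, 3 <= k & l = rcons (frun k k) 2 |
      exists2 k, 2 <= k & l = rcons (frun k.+1 k) 2].
Proof.
move=> hL hG.
case: (boolP (last 0 l == 2)) => hl.
  case: (boolP (l == [:: 4; 3; 2])) => he.
    by apply: Or44; exists 2 => //; rewrite (eqP he).
  have [hD hl'] := Lam_Dom2 hL (eqP hl) he.
  move: hG; rewrite hl' G_rcons // => /rcons_inj [] hF.
  have [k hk [] ->] := dom_fix hD hF.
    by apply: Or43; exists k.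
  by apply: Or44; exists k => //; lia.
have hD := Lam_Dom hL hl.
move: hG; rewrite G_Dom // => hF.
have [k hk [] ->] := dom_fix hD hF.
  by apply: Or41; exists k.
by apply: Or42; exists k.
Qed.

Lemma nth1_frun c k : 2 <= k -> nth 0 (frun c k) 1 = c + k - 2.
Proof. by move=> hk; rewrite nth_frun //; lia. Qed.

Lemma nth1_frunr c k : 2 <= k -> nth 0 (rcons (frun c k) 2) 1 = c + k - 2.
Proof. by move=> hk; rewrite nth_rcons0 ?size_frun // nth1_frun. Qed.

Lemma sumn_frunr c k : sumn (rcons (frun c k) 2) = sumn (frun c k) + 2.
Proof. by rewrite sumn_rcons. Qed.

Lemma fixed_P n l : Lam n l -> G l = l ->
  if odd (nth 0 l 1) then exists2 t, 2 <= t & (n = P1 t \/ n = P4 t)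
  else exists2 t, 2 <= t & (n = P2 t \/ n = P3 t).
Proof.
move=> hL hG.
have hn : sumn l = n by case: hL.
case: (G_fix hL hG) => -[k hk el]; subst l;
  rewrite ?nth1_frun ?nth1_frunr; try lia;
  move: hn; rewrite ?sumn_frunr => hn.
- have := sumn_frun k k; rewrite hn.
  have -> : odd (k + k - 2) = false by rewrite (_ : k + k - 2 = (k.-1).*2) ?odd_double //; lia.
  move=> h; exists k.-1; [lia | left]; apply/eqP; rewrite -(eqn_pmul2r (_ : 0 < 2)) //.
  rewrite P2E; apply/eqP; nia.
- have := sumn_frun k.+1 k.
  have -> : odd (k.+1 + k - 2) = true.
    by rewrite (_ : k.+1 + k - 2 = (k.-1).*2.+1) ?oddS ?odd_double //; lia.
  move=> h; exists k.-1; [lia | right]; apply/eqP; rewrite -(eqn_pmul2r (_ : 0 < 2)) //.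
  rewrite P4E; apply/eqP; nia.
- have := sumn_frun k k.
  have -> : odd (k + k - 2) = false by rewrite (_ : k + k - 2 = (k.-1).*2) ?odd_double //; lia.
  move=> h; exists k.-1; [lia | right]; apply/eqP; rewrite -(eqn_pmul2r (_ : 0 < 2)) //.
  rewrite P3E; apply/eqP; nia.
- have := sumn_frun k.+1 k.
  have -> : odd (k.+1 + k - 2) = true.
    by rewrite (_ : k.+1 + k - 2 = (k.-1).*2.+1) ?oddS ?odd_double //; lia.
  move=> h; exists k; [lia | left]; apply/eqP; rewrite -(eqn_pmul2r (_ : 0 < 2)) //.
  rewrite P1E; apply/eqP; nia.
Qed.

Lemma G_fix' n l : Lam n l -> G l = l ->
  exists k (e p : bool), [/\ 3 <= k + (e && p),
     l = (if p then rcons (frun (k + e) k) 2 else frun (k + e) k),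
     odd (nth 0 l 1) = e & n * 2 + k = k * (3 * k + 2 * e) + 4 * p].
Proof.
move=> hL hG.
have hn : sumn l = n by case: hL.
case: (G_fix hL hG) => -[k hk el]; subst l.
- exists k, false, false; split; rewrite /= ?addn0 //; try lia.
    rewrite nth1_frun; last lia.
    by rewrite (_ : k + k - 2 = (k.-1).*2) ?odd_double //; lia.
  have := sumn_frun k k; rewrite hn; nia.
- exists k, true, false; split; rewrite /= ?addn1 //; try lia.
    rewrite nth1_frun; last lia.
    by rewrite (_ : k.+1 + k - 2 = (k.-1).*2.+1) ?oddS ?odd_double //; lia.
  have := sumn_frun k.+1 k; rewrite hn; nia.
- exists k, false, true; split; rewrite /= ?addn0 //; try lia.
    rewrite nth1_frunr; last lia.
    by rewrite (_ : k + k - 2 = (k.-1).*2) ?odd_double //; lia.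
  have := sumn_frun k k; rewrite sumn_frunr in hn; rewrite -hn; nia.
- exists k, true, true; split; rewrite /= ?addn1 //; try lia.
    rewrite nth1_frunr; last lia.
    by rewrite (_ : k.+1 + k - 2 = (k.-1).*2.+1) ?oddS ?odd_double //; lia.
  have := sumn_frun k.+1 k; rewrite sumn_frunr in hn; rewrite -hn; nia.
Qed.

Lemma fixed_uniq n l l' : Lam n l -> G l = l -> Lam n l' -> G l' = l' ->
  odd (nth 0 l 1) = odd (nth 0 l' 1) -> l = l'.
Proof.
move=> hL hG hL' hG' hp.
have [k [e [p [hk el he hn]]]] := G_fix' hL hG.
have [j [e' [p' [hj el' he' hn']]]] := G_fix' hL' hG'.
rewrite he he' in hp; subst e'.
rewrite el el'.
have [e1 e2] : k = j /\ p = p'; last by subst.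
clear - hk hj hn hn'.
case: e p p' hk hj hn hn' => -[] -[] /= hk hj hn hn';
  (case: (ltngtP k j) => h; [nia | nia | subst; split=> //; lia]).
Qed.

Lemma fam_Lam_fix k e p : 3 <= k + (e && p) ->
  let l := (if p then rcons (frun (k + e) k) 2 else frun (k + e) k) in
  [/\ Lam (sumn l) l, G l = l & odd (nth 0 l 1) = e].
Proof.
move=> hk; cbv zeta.
have hk1 : 0 < k by move: hk; case: (e && p) => /=; lia.
have hpar : odd (k + e + k - 2) = e.
  case: (e) => /=; rewrite ?addn1 ?addn0.
    by rewrite (_ : k.+1 + k - 2 = (k.-1).*2.+1) ?oddS ?odd_double //; lia.
  by rewrite (_ : k + k - 2 = (k.-1).*2) ?odd_double //; lia.
case: (boolP (e && p)) hk => hep hk.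
  case/andP: hep => he hp; rewrite he hp /= in hpar *.
  case: (ltngtP k 2) => h2; try lia.
    have hD : Dom (frun (k + 1) k) by apply: Dom_frun; lia.
    have [h1 _ _ _] := Dom_Lam2 hD.
    rewrite sumn_rcons; split=> //.
      by rewrite G_rcons // F_frun // ?addn1 ?eqxx ?orbT; lia.
    by rewrite nth1_frunr //; lia.
  subst k; split=> //.
  split=> //=; move=> [|[|[|i]]] //=.
have hD : Dom (frun (k + e) k) by apply: Dom_frun; lia.
have ck : (k + e == k) || (k + e == k.+1) by case: (e) => /=; rewrite ?addn0 ?addn1 eqxx ?orbT.
case: p hep => /= hep.
  have [h1 _ _ _] := Dom_Lam2 hD.
  rewrite sumn_rcons; split=> //.
    by rewrite G_rcons // F_frun //; lia.
  by rewrite nth1_frunr //; lia.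
have [h1 _] := Dom_Lam hD.
split=> //.
  by rewrite G_Dom // F_frun //; lia.
by rewrite nth1_frun //; lia.
Qed.

Definition toL (s : seq nat) := if s is a :: b :: c :: d then a.+1 :: b :: c.-1 :: d else s.
Definition fromL (l : seq nat) := if l is a :: b :: c :: d then b :: b :: b :: d else l.

Lemma sorted_geq_last s i : sorted geq s -> i < size s -> last 0 s <= nth 0 s i.
Proof.
move=> hs hi; rewrite -nth_last.
have := @sorted_leq_nth _ geq (fun x y z h1 h2 => leq_trans h2 h1) (fun x => leqnn x) 0 s hs i (size s).-1.
rewrite !inE; apply; lia.
Qed.

Lemma S2L n b s : is_partition n s -> good_part b s ->
  [/\ Lam n (toL s), odd (nth 0 (toL s) 1) = b & fromL (toL s) = s].
Proof.
case/and3P=> hso hpos /eqP hsum.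
case/and5P=> hsz /eqP e01 /eqP e12 h3 /and4P[/eqP hodd huq hd4 hl1].
have [a [d es]] : exists a d, s = [:: a, a, a & d].
  case: s hsz e01 e12 {hso hpos hsum h3 hodd huq hd4 hl1} => [|x [|y [|z d]]] //= _ e1 e2.
  by exists x, d; rewrite e1 e2.
subst s.
rewrite /= ?drop0 in hsum h3 hodd huq hd4 hl1.
have hall2 : forall i, i < (size d).+3 -> 2 <= nth 0 [:: a, a, a & d] i.
  move=> i hi.
  have hl := sorted_geq_last hso hi.
  have hlp : 0 < last 0 [:: a, a, a & d].
    rewrite -nth_last; move/all_nthP: hpos => /(_ 0); apply; by [].
  apply: (leq_trans _ hl); move: hl1 hlp => /=; lia.
have hsd : forall j, j.+1 < size d -> nth 0 d j.+1 <= nth 0 d j.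
  move=> j hj; move/sortedP: hso => /(_ 0 (j.+3)) /=; apply; lia.
have hud : forall j, j.+1 < size d -> nth 0 d j.+1 != nth 0 d j.
  move=> j hj; rewrite nth_uniq //; [by rewrite (gtn_eqF (ltnSn j)) | exact: ltnW].
split=> //.
rewrite /=; split.
- by [].
- move=> [|[|[|j]]] /= hj; try lia.
  have := hsd j ltac:(lia); have := hud j ltac:(lia); lia.
- move=> [|[|[|j]]] /= hj; try lia. exact: (hall2 j.+3).
- apply/run_geP; split=> /=; first lia.
  move=> [|[|j]] //= hj; lia.
- rewrite /=; lia.
Qed.

Lemma L2S n l : Lam n l ->
  [/\ is_partition n (fromL l), good_part (odd (nth 0 l 1)) (fromL l) & toL (fromL l) = l].
Proof.
case=> hsz hd ha hr hsum.
have [a [b [c [d el]]]] : exists a b c d, l = [:: a, b, c & d].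
  case: l hsz {hd ha hr hsum} => [|x [|y [|z d]]] //= _.
  by exists x, y, z, d.
subst l.
have hab : a = b.+1 by apply: (run_cons (l := [:: a, b, c & d]) (j := 0)); lia.
have hbc : b = c.+1 by apply: (run_cons (l := [:: a, b, c & d]) (j := 1)); lia.
have hc2 : 2 <= c by apply: (ha 2).
subst a b.
have hdd : forall j, j.+1 < size d -> nth 0 d j.+1 < nth 0 d j.
  by move=> j hj; apply: (hd j.+3).
have hd0 : 0 < size d -> nth 0 d 0 < c by move=> h; apply: (hd 2) => /=; lia.
have had : forall j, j < size d -> 2 <= nth 0 d j by move=> j hj; apply: (ha j.+3).
split=> /=.
- apply/and3P; split.
  + apply/(sortedP 0) => -[|[|[|j]]] /= hj //.
      by have := hd0 ltac:(lia); rewrite /geq; lia.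
    by have := hdd j ltac:(lia); rewrite /geq; lia.
  + apply/(all_nthP 0) => -[|[|[|j]]] /= hj; rewrite ?ltnS //; try lia.
    by have := had j ltac:(lia); lia.
  + apply/eqP; rewrite -hsum /=; lia.
- apply/and5P; split=> //=; try lia.
  apply/and4P; split=> //; rewrite ?drop0.
  + have : sorted (fun x y => y < x) d.
      apply/(sortedP 0) => j hj; exact: hdd.
    apply: sorted_uniq; [by move=> x y z h1 h2; exact: ltn_trans h2 h1 | by move=> x; rewrite ltnn].
  + apply/implyP => h; have := hd0 ltac:(lia); lia.
  + case: d hdd hd0 had {hd ha hsz hsum hr} => [|x d] _ _ had /=; first lia.
    have := had (size d) (ltnSn _).
    rewrite (_ : nth 0 (x :: d) (size d) = last 0 (x :: d)); last by rewrite -nth_last.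
    move=> /= h; apply/eqP; lia.
- by [].
Qed.

Definition enc n (s : seq nat) : n.-tuple 'I_n.+1 := [tuple inord (nth 0 s i) | i < n].

Lemma val_enc n s : (forall i, nth 0 s i <= n) -> map val (enc n s) = mkseq (nth 0 s) n.
Proof.
move=> hb; apply: (eq_from_nth (x0 := 0)); rewrite size_map size_tuple ?size_mkseq // => i hi.
rewrite nth_mkseq // (nth_map ord0) ?size_tuple //.
have -> : nth ord0 (enc n s) i = tnth (enc n s) (Ordinal hi) by rewrite (tnth_nth ord0).
by rewrite tnth_mktuple /= inordK // ltnS.
Qed.

Lemma part_bounds n s : is_partition n s -> size s <= n /\ (forall i, nth 0 s i <= n).
Proof.
case/and3P=> _ hpos /eqP <-.
split.
  elim: s hpos => //= x s IH /andP [h1 h2]; have := IH h2; lia.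
elim: s hpos => [|x s IH] /= hpos i; first by rewrite nth_nil.
case/andP: hpos => h1 h2; case: i => [|i] /=; first lia.
have := IH h2 i; lia.
Qed.

Lemma mkseq_pad s m : size s <= m -> mkseq (nth 0 s) m = s ++ nseq (m - size s) 0.
Proof.
move=> hs; apply: (eq_from_nth (x0 := 0)); rewrite size_mkseq ?size_cat ?size_nseq; first lia.
move=> i hi; rewrite nth_mkseq // nth_cat nth_nseq.
case: ifP => // h; rewrite nth_default; last lia.
by case: ifP.
Qed.

Lemma path_nseq0 y m : path geq y (nseq m 0).
Proof. by elim: m y => //= m IH y; rewrite IH andbT. Qed.

Lemma parts_enc n s : is_partition n s ->
  parts_of (enc n s) = s /\ sorted geq (map val (enc n s)).
Proof.
move=> hp; have [hsz hb] := part_bounds hp.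
case/and3P: hp => hso hpos _.
rewrite /parts_of val_enc // mkseq_pad //.
split.
  rewrite filter_cat filter_nseq /= cats0.
  exact/all_filterP.
case: s hso {hpos hsz hb} => [|x s] /= hso; first by case: (n - 0) => //= m; exact: path_nseq0.
by rewrite cat_path hso path_nseq0.
Qed.

Lemma sorted_split (x : seq nat) : sorted geq x ->
  x = [seq y <- x | 0 < y] ++ nseq (size x - size [seq y <- x | 0 < y]) 0.
Proof.
elim: x => //= a x IH hs.
have hx := path_sorted hs.
case: (posnP a) => ha.
  subst a.
  have hall : all (fun y => y <= 0) x.
    have := order_path_min (fun y z w h1 h2 => leq_trans h2 h1) hs.
    by apply: sub_all => y /=.
  have ex : x = nseq (size x) 0.
    apply/all_pred1P; apply: sub_all hall; by move=> y /=; rewrite leqn0.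
  have -> : [seq y <- x | 0 < y] = [::].
    by rewrite {1}ex filter_nseq.
  by rewrite subn0 /= -ex.
by rewrite /= subSS -(IH hx).
Qed.

Lemma enc_parts n (t : n.-tuple 'I_n.+1) : sorted geq (map val t) -> enc n (parts_of t) = t.
Proof.
move=> hs.
have hb : forall i, nth 0 (parts_of t) i <= n.
  move=> i; case: (ltnP i (size (parts_of t))) => hi; last by rewrite nth_default.
  have : nth 0 (parts_of t) i \in map val t.
    by have := mem_nth 0 hi; rewrite mem_filter => /andP [].
  by move=> /mapP [z _ ->]; exact: (ltn_ord z).
have hsz : size (parts_of t) <= n.
  by rewrite -[X in _ <= X](size_tuple t) -(size_map val) size_filter count_size.
apply: val_inj; apply: (inj_map val_inj).
rewrite val_enc // mkseq_pad // [RHS](sorted_split hs) size_map size_tuple.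
by [].
Qed.

Lemma exist_fix n b :
  (if b then exists2 t, 2 <= t & (n = P1 t \/ n = P4 t)
   else exists2 t, 2 <= t & (n = P2 t \/ n = P3 t)) ->
  exists l, [/\ Lam n l, G l = l & odd (nth 0 l 1) = b].
Proof.
have key : forall k (e p : bool), 3 <= k + (e && p) ->
    (sumn (frun (k + e) k) + 2 * p) * 2 = n * 2 ->
    exists l, [/\ Lam n l, G l = l & odd (nth 0 l 1) = e].
  move=> k e p hk hs.
  have [h1 h2 h3] := fam_Lam_fix hk.
  set l := (if p then _ else _) in h1 h2 h3.
  exists l; split=> //.
  have -> : n = sumn l; last by [].
  rewrite /l; case: (p) hs => /=; rewrite ?sumn_rcons; lia.
case: b => -[t ht [] en].
- apply: (key t true true); first by simpl; lia.
  have := sumn_frun (t + true) t; rewrite en P1E; nia.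
- apply: (key t.+1 true false); first by simpl; lia.
  have := sumn_frun (t.+1 + true) t.+1; rewrite en P4E; nia.
- apply: (key t.+1 false false); first by simpl; lia.
  have := sumn_frun (t.+1 + false) t.+1; rewrite en P2E; nia.
- apply: (key t.+1 false true); first by simpl; lia.
  have := sumn_frun (t.+1 + false) t.+1; rewrite en P3E; nia.
Qed.

Definition Xs n b : {set n.-tuple 'I_n.+1} :=
  [set t : n.-tuple 'I_n.+1 | sorted geq (map val t) && is_partition n (parts_of t)
      && good_part b (parts_of t)].

Definition lam n (t : n.-tuple 'I_n.+1) := toL (parts_of t).

Lemma X_lam n b t : t \in Xs n b ->
  [/\ Lam n (lam t), odd (nth 0 (lam t) 1) = b & t = enc n (fromL (lam t))].
Proof.
rewrite inE => /andP [/andP [hs hp] hg].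
have [h1 h2 h3] := S2L hp hg.
by split=> //; rewrite /lam h3 enc_parts.
Qed.

Lemma lam_X n l : Lam n l ->
  enc n (fromL l) \in Xs n (odd (nth 0 l 1)) /\ lam (enc n (fromL l)) = l.
Proof.
move=> hL; have [hp hg he] := L2S hL.
have [hpe hse] := parts_enc hp.
by split; [rewrite inE hse hpe hp hg | rewrite /lam hpe he].
Qed.

Definition iota n (t : n.-tuple 'I_n.+1) :=
  if (t \in Xs n false) || (t \in Xs n true) then enc n (fromL (G (lam t))) else t.

Lemma iota_X n b t : t \in Xs n b ->
  [/\ iota t \in Xs n (odd (nth 0 (G (lam t)) 1)), lam (iota t) = G (lam t)
    & iota (iota t) = t].
Proof.
move=> hX; have [hL hb ht] := X_lam hX.
have [hGL hGG _] := G_props hL.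
have [hX' hl'] := lam_X hGL.
have hin : forall u b', u \in Xs n b' -> (u \in Xs n false) || (u \in Xs n true).
  by move=> u [] ->; rewrite ?orbT.
have e1 : iota t = enc n (fromL (G (lam t))) by rewrite /iota (hin _ _ hX).
rewrite e1; split=> //.
by rewrite /iota (hin _ _ hX') hl' hGG -ht.
Qed.

Lemma iota_inv n : involutive (@iota n).
Proof.
move=> t; case E: ((t \in Xs n false) || (t \in Xs n true)).
  by case/orP: E => h; have [] := iota_X h.
by rewrite /iota E E.
Qed.

Definition FixS n : {set n.-tuple 'I_n.+1} := [set t | G (lam t) == lam t].

Lemma iota_Y n b t : t \in Xs n b :\: FixS n -> iota t \in Xs n (~~ b) :\: FixS n.
Proof.
rewrite in_setD => /andP [hnf hX]; rewrite inE in hnf.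
have [hx hl _] := iota_X hX; have [hL hb _] := X_lam hX.
have [_ hGG hpar] := G_props hL.
case: hpar => [e | [hne hpar]]; first by rewrite e eqxx in hnf.
rewrite in_setD; apply/andP; split; last by rewrite -hb -hpar.
by rewrite inE hl hGG eq_sym.
Qed.

Lemma Y_eq n : #|Xs n false :\: FixS n| = #|Xs n true :\: FixS n|.
Proof.
rewrite -(card_imset _ (can_inj (iota_inv (n:=n)))).
congr (#|pred_of_set _|); apply/setP => t; apply/imsetP/idP.
  by case=> u hu ->; apply: (iota_Y hu).
move=> ht; exists (iota t); first exact: (iota_Y ht).
by rewrite iota_inv.
Qed.

Lemma Z_fixed n b t : t \in Xs n b :&: FixS n ->
  [/\ Lam n (lam t), G (lam t) = lam t & odd (nth 0 (lam t) 1) = b].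
Proof.
rewrite in_setI => /andP [hX]; rewrite inE => /eqP hf.
by have [hL hb _] := X_lam hX.
Qed.

Lemma Z_empty n b : (forall l, Lam n l -> G l = l -> odd (nth 0 l 1) = b -> False) ->
  #|Xs n b :&: FixS n| = 0.
Proof.
move=> h; apply: eq_card0 => t; apply/negbTE/negP => ht.
by have [h1 h2 h3] := Z_fixed ht; apply: (h _ h1 h2 h3).
Qed.

Lemma Z_one n b l0 : Lam n l0 -> G l0 = l0 -> odd (nth 0 l0 1) = b ->
  #|Xs n b :&: FixS n| = 1.
Proof.
move=> hL0 hG0 hb0.
apply/eqP/cards1P; exists (enc n (fromL l0)); apply/setP => t; rewrite in_set1.
apply/idP/eqP.
  move=> ht; have [h1 h2 h3] := Z_fixed ht.
  have e : lam t = l0 by apply: (fixed_uniq h1 h2 hL0 hG0); rewrite h3 hb0.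
  have [_ _ et] := X_lam (b := b) (t := t) ltac:(by move: ht; rewrite in_setI => /andP []).
  by rewrite et e.
move=> ->; have [hX hl] := lam_X hL0.
by rewrite in_setI -hb0 hX inE hl hG0 eqxx.
Qed.

Lemma countE n b : count_parts b n = #|Xs n b|.
Proof. by []. Qed.

Lemma count_split n b : count_parts b n = #|Xs n b :&: FixS n| + #|Xs n b :\: FixS n|.
Proof. by rewrite countE cardsID. Qed.

Unset Implicit Arguments.

Theorem corollary4p8 (n : nat) (hn : 6 <= n) :
  [/\ (forall t, 2 <= t -> [/\ n <> P1 t, n <> P2 t, n <> P3 t & n <> P4 t]) ->
        e_count n = o_count n,
      (exists2 t, 2 <= t & n = P1 t \/ n = P4 t) ->
        e_count n + 1 = o_count n
    & (exists2 t, 2 <= t & n = P2 t \/ n = P3 t) ->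
        e_count n = o_count n + 1].
Proof.
have hY := Y_eq n.
rewrite /e_count /o_count !count_split hY.
split.
- move=> H.
  have z0 : forall b, #|Xs n b :&: FixS n| = 0.
    move=> b; apply: Z_empty => l hL hG hb.
    have := fixed_P hL hG; rewrite hb.
    case: b {hb} => -[t ht [] e]; have [h1 h2 h3 h4] := H t ht; by [].
  by rewrite !z0.
- move=> H.
  have [l0 [hL0 hG0 hb0]] := exist_fix (b := true) H.
  rewrite (Z_one hL0 hG0 hb0).
  have -> : #|Xs n false :&: FixS n| = 0.
    apply: Z_empty => l hL hG hb.
    have := fixed_P hL hG; rewrite hb => -[u hu hu'].
    case: H => t ht htt; exact: (Pdisj ht hu htt hu').
  lia.
- move=> H.
  have [l0 [hL0 hG0 hb0]] := exist_fix (b := false) H.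
  rewrite (Z_one hL0 hG0 hb0).
  have -> : #|Xs n true :&: FixS n| = 0.
    apply: Z_empty => l hL hG hb.
    have := fixed_P hL hG; rewrite hb => -[u hu hu'].
    case: H => t ht htt; exact: (Pdisj hu ht hu' htt).
  lia.
Qed.
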